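(* Let $(x,q)\in\mathbf J$ and suppose $q$ is not an integer. Then: (i) for each positive integer $m$ there exists a neighborhood $\mathbf W\subset\mathbb R^2$ of $(x,q)$ such that $b_1(y,r)\ldots b_m(y,r)\le b_1(x,q)\ldots b_m(x,q)$ (lexicographically) for all $(y,r)\in\mathbf W\cap\mathbf J$; (ii) if $(y_n,r_n)$ is a sequence in $\mathbf J$ converging to $(x,q)$ from above (i.e. $y_n\ge x$ and $r_n\ge q$ for all $n$), then the sequences $(b_i(y_n,r_n))_{i\ge1}$ converge coordinate-wise to $(b_i(x,q))_{i\ge1}$ as $n\to\infty$.
   Context: For real $q>1$ let $\lceil q\rceil$ be the smallest integer $\ge q$ and $A_q=\{0,\ldots,\lceil q\rceil-1\}$. Let $\mathbf J$ be the set of $(x,q)$ with $q>1$ and $x\in J_q:=[0,(\lceil q\rceil-1)/(q-1)]$. For $(x,q)\in\mathbf J$, the greedy expansion $(b_i(x,q))$ is defined recursively: $b_n(x,q)$ is the largest element of $A_q$ with $\sum_{i=1}^n b_i(x,q)q^{-i}\le x$. Finite words of equal length are compared lexicographically. *)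

(* Defs.v *)
From Stdlib Require Import Reals Lra Lia List.
Open Scope R_scope.

(* ceil_Z q = smallest integer >= q.  [up q] satisfies q < up q <= q + 1. *)
Definition ceil_Z (q : R) : Z :=
  if Req_EM_T (IZR (up q - 1)) q then (up q - 1)%Z else up q.

(* number of digits: ceil q, so A_q = {0, ..., ceil q - 1} *)
Definition nq (q : R) : nat := Z.to_nat (ceil_Z q).

Definition inJ (x q : R) : Prop :=
  1 < q /\ 0 <= x /\ x <= (IZR (ceil_Z q) - 1) / (q - 1).

(* largest a in {0,...,c-1} with s + a q^{-n} <= x (0 if none) *)
Fixpoint best_digit (c : nat) (x q s : R) (n : nat) : nat :=
  match c with
  | O => O
  | S k => if Rle_dec (s + INR k / q ^ n) x then k else best_digit k x q s n
  end.

(* gsum x q n = sum_{i=1}^n b_i(x,q) q^{-i} *)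
Fixpoint gsum (x q : R) (n : nat) : R :=
  match n with
  | O => 0
  | S k => let s := gsum x q k in
           s + INR (best_digit (nq q) x q s (S k)) / q ^ (S k)
  end.

(* greedy digit b_n(x,q), meaningful for n >= 1 *)
Definition b (x q : R) (n : nat) : nat :=
  best_digit (nq q) x q (gsum x q (pred n)) n.

Definition bword (x q : R) (m : nat) : list nat := map (b x q) (seq 1 m).

(* lexicographic order on finite words (used for words of equal length) *)
Fixpoint lex_le (u v : list nat) : Prop :=
  match u, v with
  | nil, _ => True
  | a :: u', c :: v' => (a < c)%nat \/ (a = c /\ lex_le u' v')
  | _ :: _, nil => False
  end.

(* Main.v *)
Require Import Defs.
From Stdlib Require Import Reals Lra Lia List Arith.
Open Scope R_scope.

Lemma bd_lt c x q s n : (0 < c)%nat -> (best_digit c x q s n < c)%nat.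
Proof.
  induction c; simpl; intros H. lia.
  destruct (Rle_dec _ _). lia.
  destruct c. simpl; lia. specialize (IHc ltac:(lia)). lia.
Qed.

Lemma bd_cond c x q s n :
  best_digit c x q s n = O \/ s + INR (best_digit c x q s n) / q ^ n <= x.
Proof. induction c; simpl. left; reflexivity. destruct (Rle_dec _ _); auto. Qed.

Lemma bd_max c x q s n k :
  (best_digit c x q s n < k < c)%nat -> ~ (s + INR k / q ^ n <= x).
Proof.
  induction c; simpl; intros H. lia.
  destruct (Rle_dec _ _) as [h|h]. lia.
  destruct (Nat.eq_dec k c). subst; auto. apply IHc; lia.
Qed.

Lemma bd_ge c x q s n a :
  (a < c)%nat -> s + INR a / q ^ n <= x -> (a <= best_digit c x q s n)%nat.
Proof.
  intros H1 H2. destruct (le_lt_dec a (best_digit c x q s n)); auto.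
  exfalso; apply (bd_max c x q s n a); auto; lia.
Qed.

Lemma bd_le c x q s n a : 0 < q ->
  ((c <= S a)%nat \/ ~ (s + INR (S a) / q ^ n <= x)) ->
  (best_digit c x q s n <= a)%nat.
Proof.
  intros Hq [H|H].
  - destruct c. simpl; lia. pose proof (bd_lt (S c) x q s n ltac:(lia)). lia.
  - destruct (le_lt_dec (best_digit c x q s n) a) as [h|h]; auto. exfalso.
    destruct (bd_cond c x q s n) as [h'|h']. lia.
    apply H. eapply Rle_trans; [|exact h'].
    apply Rplus_le_compat_l. unfold Rdiv. apply Rmult_le_compat_r.
    left; apply Rinv_0_lt_compat, pow_lt, Hq.
    apply le_INR; lia.
Qed.

Fixpoint Gs (d : nat -> nat) (r : R) (n : nat) : R :=
  match n with O => 0 | S k => Gs d r k + INR (d (S k)) / r ^ S k end.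

Lemma gsum_Gs y r n : gsum y r n = Gs (b y r) r n.
Proof. induction n; simpl; auto. rewrite <- IHn. reflexivity. Qed.

Lemma Gs_ext d e r n : (forall i, (1 <= i <= n)%nat -> d i = e i) -> Gs d r n = Gs e r n.
Proof.
  induction n; simpl; intros H; auto.
  rewrite IHn by (intros; apply H; lia). rewrite H by lia. reflexivity.
Qed.

Lemma div_pow_mono k q r m : 0 < q <= r -> INR k / r ^ m <= INR k / q ^ m.
Proof.
  intros H. unfold Rdiv; apply Rmult_le_compat_l; [apply pos_INR|].
  apply Rinv_le_contravar; [apply pow_lt; lra| apply pow_incr; lra].
Qed.

Lemma Gs_mono d q r n : 0 < q <= r -> Gs d r n <= Gs d q n.
Proof.
  intros H. induction n; simpl. lra.
  apply Rplus_le_compat; auto. exact (div_pow_mono _ q r (S n) H).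
Qed.

Lemma cont_term k m q : 0 < q -> continuity_pt (fun r => INR k / r ^ m) q.
Proof.
  intros Hq.
  apply (continuity_pt_div (fun _ => INR k) (fun r => r ^ m)).
  apply continuity_pt_const; intros a b0; reflexivity.
  apply derivable_continuous_pt, derivable_pt_pow.
  apply pow_nonzero; lra.
Qed.

Lemma cont_Gs d n q : 0 < q -> continuity_pt (fun r => Gs d r n) q.
Proof.
  intros Hq. induction n; simpl.
  apply continuity_pt_const; intros a b0; reflexivity.
  apply (continuity_pt_plus (fun r => Gs d r n) (fun r => INR (d (S n)) / r ^ S n)); auto.
  apply cont_term; auto.
Qed.

Lemma cont_g d n k m q : 0 < q -> continuity_pt (fun r => Gs d r n + INR k / r ^ m) q.
Proof.
  intros Hq.
  apply (continuity_pt_plus (fun r => Gs d r n) (fun r => INR k / r ^ m)).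
  apply cont_Gs; auto. apply cont_term; auto.
Qed.

Definition near (x q : R) (P : R -> R -> Prop) : Prop :=
  exists d, 0 < d /\ forall y r, Rabs (y - x) < d -> Rabs (r - q) < d -> P y r.
Definition nearA (x q : R) (P : R -> R -> Prop) : Prop :=
  exists d, 0 < d /\ forall y r, Rabs (y - x) < d -> Rabs (r - q) < d ->
     x <= y -> q <= r -> P y r.

Lemma near_and x q P Q : near x q P -> near x q Q -> near x q (fun y r => P y r /\ Q y r).
Proof.
  intros [d1 [h1 H1]] [d2 [h2 H2]]. exists (Rmin d1 d2). split. apply Rmin_pos; auto.
  intros y r Hy Hr. pose proof (Rmin_l d1 d2); pose proof (Rmin_r d1 d2).
  split; [apply H1|apply H2]; lra.
Qed.

Lemma nearA_and x q P Q : nearA x q P -> nearA x q Q -> nearA x q (fun y r => P y r /\ Q y r).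
Proof.
  intros [d1 [h1 H1]] [d2 [h2 H2]]. exists (Rmin d1 d2). split. apply Rmin_pos; auto.
  intros y r Hy Hr Hy' Hr'. pose proof (Rmin_l d1 d2); pose proof (Rmin_r d1 d2).
  split; [apply H1|apply H2]; auto; lra.
Qed.

Lemma near_mono x q (P Q : R -> R -> Prop) :
  near x q P -> (forall y r, P y r -> Q y r) -> near x q Q.
Proof. intros [d [h H]] HPQ. exists d; split; auto. Qed.

Lemma nearA_mono x q (P Q : R -> R -> Prop) :
  nearA x q P -> (forall y r, x <= y -> q <= r -> P y r -> Q y r) -> nearA x q Q.
Proof. intros [d [h H]] HPQ. exists d; split; auto. Qed.

Lemma near_A x q P : near x q P -> nearA x q P.
Proof. intros [d [h H]]. exists d; split; auto. Qed.

Lemma cont_close g q e : continuity_pt g q -> 0 < e ->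
  exists al, 0 < al /\ forall r, Rabs (r - q) < al -> Rabs (g r - g q) < e.
Proof.
  intros Hc he. destruct (Hc e he) as [al [Hal H]].
  exists al. split; auto. intros r Hr.
  destruct (Req_dec r q) as [->|Hne]. rewrite Rminus_diag, Rabs_R0; lra.
  assert (HH := H r). simpl in HH. unfold R_dist in HH. apply HH.
  split; auto. split. exact I. intro; apply Hne; auto.
Qed.

Lemma near_lt g x q : continuity_pt g q -> g q < x -> near x q (fun y r => g r < y).
Proof.
  intros Hc Hl. set (e := (x - g q)/2). assert (he : e > 0) by (unfold e; lra).
  destruct (cont_close g q e Hc he) as [al [Hal H]].
  exists (Rmin al e). split. apply Rmin_pos; lra.
  intros y r Hy Hr. pose proof (Rmin_l al e); pose proof (Rmin_r al e).
  assert (H2 := H r ltac:(lra)). apply Rabs_def2 in H2. apply Rabs_def2 in Hy.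
  unfold e in *; lra.
Qed.

Lemma near_gt g x q : continuity_pt g q -> x < g q -> near x q (fun y r => y < g r).
Proof.
  intros Hc Hl. set (e := (g q - x)/2). assert (he : e > 0) by (unfold e; lra).
  destruct (cont_close g q e Hc he) as [al [Hal H]].
  exists (Rmin al e). split. apply Rmin_pos; lra.
  intros y r Hy Hr. pose proof (Rmin_l al e); pose proof (Rmin_r al e).
  assert (H2 := H r ltac:(lra)). apply Rabs_def2 in H2. apply Rabs_def2 in Hy.
  unfold e in *; lra.
Qed.

Lemma ceil_char q z : IZR z - 1 < q < IZR z -> ceil_Z q = z.
Proof.
  intros H. unfold ceil_Z.
  assert (E : up q = z) by (symmetry; apply tech_up; lra). rewrite E.
  destruct Req_EM_T as [e|]; auto. rewrite minus_IZR in e. simpl in e. lra.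
Qed.

Lemma near_nq x q : 1 < q -> (forall z : Z, q <> IZR z) ->
  (0 < nq q)%nat /\ near x q (fun y r => 1 < r /\ nq r = nq q).
Proof.
  intros Hq Hz. destruct (archimed q) as [A1 A2].
  assert (A3 : IZR (up q) - q < 1).
  { destruct A2 as [A2|A2]; auto. exfalso. apply (Hz (up q - 1)%Z).
    rewrite minus_IZR. simpl. lra. }
  assert (Hc : ceil_Z q = up q) by (apply ceil_char; lra).
  split.
  - unfold nq. rewrite Hc. assert (1 < up q)%Z by (apply lt_IZR; lra). lia.
  - exists (Rmin (q - 1) (Rmin (q - (IZR (up q) - 1)) (IZR (up q) - q))).
    split. repeat apply Rmin_pos; lra.
    intros y r _ Hr.
    pose proof (Rmin_l (q - 1) (Rmin (q - (IZR (up q) - 1)) (IZR (up q) - q))).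
    pose proof (Rmin_r (q - 1) (Rmin (q - (IZR (up q) - 1)) (IZR (up q) - q))).
    pose proof (Rmin_l (q - (IZR (up q) - 1)) (IZR (up q) - q)).
    pose proof (Rmin_r (q - (IZR (up q) - 1)) (IZR (up q) - q)).
    apply Rabs_def2 in Hr.
    split. lra. unfold nq. rewrite Hc. rewrite (ceil_char r (up q)); auto. lra.
Qed.

Definition agree (f g : nat -> nat) (n : nat) : Prop :=
  forall i, (1 <= i <= n)%nat -> f i = g i.

Lemma upper x q n : 1 < q -> (forall z : Z, q <> IZR z) ->
  near x q (fun y r => agree (b y r) (b x q) n -> (b y r (S n) <= b x q (S n))%nat).
Proof.
  intros Hq Hz. destruct (near_nq x q Hq Hz) as [Hc0 Hn].
  set (a := b x q (S n)).
  assert (Ea : a = best_digit (nq q) x q (gsum x q n) (S n)) by reflexivity.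
  destruct (le_lt_dec (nq q) (S a)) as [l|l].
  - apply near_mono with (1 := Hn). intros y r [Hr Hc] Hag.
    change (best_digit (nq r) y r (gsum y r n) (S n) <= a)%nat.
    apply bd_le. lra. left; rewrite Hc; exact l.
  - assert (Hf : ~ (gsum x q n + INR (S a) / q ^ S n <= x)).
    { apply (bd_max (nq q)). rewrite <- Ea. lia. }
    assert (Hg := near_gt (fun r => Gs (b x q) r n + INR (S a) / r ^ S n) x q
                   (cont_g (b x q) n (S a) (S n) q ltac:(lra))).
    cbv beta in Hg. rewrite <- gsum_Gs in Hg.
    specialize (Hg ltac:(lra)).
    apply near_mono with (1 := near_and _ _ _ _ Hn Hg).
    intros y r [[Hr Hc] Hy] Hag.
    change (best_digit (nq r) y r (gsum y r n) (S n) <= a)%nat.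
    apply bd_le. lra. right. intro H.
    rewrite gsum_Gs, (Gs_ext (b y r) (b x q)) in H by exact Hag. lra.
Qed.

Lemma lower x q n : 1 < q -> (forall z : Z, q <> IZR z) ->
  nearA x q (fun y r => agree (b y r) (b x q) n -> (b x q (S n) <= b y r (S n))%nat).
Proof.
  intros Hq Hz. destruct (near_nq x q Hq Hz) as [Hc0 Hn].
  set (a := b x q (S n)).
  assert (Ea : a = best_digit (nq q) x q (gsum x q n) (S n)) by reflexivity.
  destruct (Nat.eq_dec a 0) as [E0|Ne0].
  { exists 1. split. lra. intros. rewrite E0. lia. }
  assert (Hlt : (a < nq q)%nat) by (rewrite Ea; apply bd_lt; auto).
  assert (Hcond : gsum x q n + INR a / q ^ S n <= x).
  { destruct (bd_cond (nq q) x q (gsum x q n) (S n)) as [h|h]; rewrite <- Ea in h.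
    lia. exact h. }
  destruct (Rle_lt_or_eq_dec _ _ Hcond) as [Hs|He].
  - assert (Hg := near_lt (fun r => Gs (b x q) r n + INR a / r ^ S n) x q
                   (cont_g (b x q) n a (S n) q ltac:(lra))).
    cbv beta in Hg. rewrite <- gsum_Gs in Hg.
    specialize (Hg ltac:(lra)).
    apply near_A.
    apply near_mono with (1 := near_and _ _ _ _ Hn Hg).
    intros y r [[Hr Hc] Hy] Hag.
    change (a <= best_digit (nq r) y r (gsum y r n) (S n))%nat.
    apply bd_ge. rewrite Hc; auto.
    rewrite gsum_Gs, (Gs_ext (b y r) (b x q)) by exact Hag. lra.
  - apply nearA_mono with (1 := near_A _ _ _ Hn).
    intros y r Hxy Hqr [Hr Hc] Hag.
    change (a <= best_digit (nq r) y r (gsum y r n) (S n))%nat.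
    apply bd_ge. rewrite Hc; auto.
    rewrite gsum_Gs, (Gs_ext (b y r) (b x q)) by exact Hag.
    rewrite gsum_Gs in He.
    pose proof (Gs_mono (b x q) q r n ltac:(lra)).
    pose proof (div_pow_mono a q r (S n) ltac:(lra)). lra.
Qed.

Lemma agreeA x q n : 1 < q -> (forall z : Z, q <> IZR z) ->
  nearA x q (fun y r => agree (b y r) (b x q) n).
Proof.
  intros Hq Hz. induction n.
  - exists 1. split. lra. intros y r _ _ _ _ i Hi. lia.
  - apply nearA_mono with (1 := nearA_and _ _ _ _ IHn
       (nearA_and _ _ _ _ (near_A _ _ _ (upper x q n Hq Hz)) (lower x q n Hq Hz))).
    intros y r _ _ [H1 [H2 H3]] i Hi.
    destruct (Nat.eq_dec i (S n)) as [->|Ne].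
    + specialize (H2 H1). specialize (H3 H1). lia.
    + apply H1; lia.
Qed.

Definition lexP (f g : nat -> nat) (n : nat) : Prop :=
  agree f g n \/ exists j, (1 <= j <= n)%nat /\ (forall i, (1 <= i < j)%nat -> f i = g i)
     /\ (f j < g j)%nat.

Lemma lexA x q n : 1 < q -> (forall z : Z, q <> IZR z) ->
  near x q (fun y r => lexP (b y r) (b x q) n).
Proof.
  intros Hq Hz. induction n.
  - exists 1. split. lra. intros y r _ _. left. intros i Hi. lia.
  - apply near_mono with (1 := near_and _ _ _ _ IHn (upper x q n Hq Hz)).
    intros y r [[H1|[j [J1 [J2 J3]]]] H2].
    + specialize (H2 H1). destruct (le_lt_eq_dec _ _ H2) as [l|e].
      * right. exists (S n). split. lia. split; auto. intros i Hi; apply H1; lia.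
      * left. intros i Hi. destruct (Nat.eq_dec i (S n)) as [->|Ne]; auto. apply H1; lia.
    + right. exists j. split. lia. split; auto.
Qed.

Lemma lex_conv (f g : nat -> nat) k m :
  ((forall i, (k <= i < k + m)%nat -> f i = g i) \/
   exists j, (k <= j < k + m)%nat /\ (forall i, (k <= i < j)%nat -> f i = g i)
     /\ (f j < g j)%nat) ->
  lex_le (map f (seq k m)) (map g (seq k m)).
Proof.
  revert k. induction m; intros k H; simpl; auto.
  destruct H as [H|[j [J1 [J2 J3]]]].
  - right. split. apply H; lia. apply IHm. left. intros; apply H; lia.
  - destruct (Nat.eq_dec j k) as [->|Ne]. left; auto.
    right. split. apply J2; lia. apply IHm. right. exists j. split. lia.
    split; auto. intros; apply J2; lia.
Qed.

Theorem lemma2p5 (x q : R) :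
  inJ x q -> (forall z : Z, q <> IZR z) ->
  (forall m : nat, (0 < m)%nat ->
     exists delta : R, 0 < delta /\
       forall y r : R, Rabs (y - x) < delta -> Rabs (r - q) < delta ->
         inJ y r -> lex_le (bword y r m) (bword x q m))
  /\
  (forall ys rs : nat -> R,
     (forall n, inJ (ys n) (rs n)) ->
     (forall n, x <= ys n /\ q <= rs n) ->
     Un_cv ys x -> Un_cv rs q ->
     forall i : nat, (1 <= i)%nat ->
       Un_cv (fun n => INR (b (ys n) (rs n) i)) (INR (b x q i))).
Proof.
  intros [Hq _] Hz. split.
  - intros m Hm. destruct (lexA x q m Hq Hz) as [d [hd H]]. exists d. split; auto.
    intros y r Hy Hr _. unfold bword. apply lex_conv.
    destruct (H y r Hy Hr) as [A|[j [J1 [J2 J3]]]].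
    + left; intros; apply A; lia.
    + right; exists j; split. lia. split; auto.
  - intros ys rs HJ Hab Hy Hr i Hi eps he.
    destruct (agreeA x q i Hq Hz) as [d [hd H]].
    destruct (Hy d hd) as [N1 HN1]. destruct (Hr d hd) as [N2 HN2].
    exists (max N1 N2). intros n Hn.
    assert (E : b (ys n) (rs n) i = b x q i).
    { apply (H (ys n) (rs n)).
      - apply HN1; lia.
      - apply HN2; lia.
      - apply Hab.
      - apply Hab.
      - lia. }
    rewrite E. unfold R_dist. rewrite Rminus_diag, Rabs_R0. lra.
Qed.
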